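(* Assume $f$ satisfies conditions (A0)–(A3) below. Then there exists a constant $C>0$ such that every $2\pi$-periodic solution $x$ of the system $\ddot x(t)=f(t,x(t),\mathbf x_t,\dot x(t))$ satisfies $|x(t)|<C$, $|\dot x(t)|<C$ and $|\ddot x(t)|<C$ for all $t\in\mathbb R$.
   Context: Let $n,m\ge 1$ be integers, $\mathbf V=\mathbb R^n$ with Euclidean inner product $x\bullet z$ and norm $|x|$. For $\mathbf y=(y^1,\dots,y^m)\in\mathbf V^m$ put $|\mathbf y|:=\max_{1\le j\le m}|y^j|$. Fix reals $0=\tau_0<\tau_1<\dots<\tau_m<2\pi$ with $\tau_{m-j+1}=2\pi-\tau_j$ for $j=1,\dots,m$. Let $f:\mathbb R\times\mathbf V\times\mathbf V^m\times\mathbf V\to\mathbf V$, and for a function $x:\mathbb R\to\mathbf V$ put $\mathbf x_t:=(x(t-\tau_1),\dots,x(t-\tau_m))$. A $2\pi$-periodic solution is a $C^2$ function $x:\mathbb R\to\mathbf V$ with $x(t+2\pi)=x(t)$ and $\ddot x(t)=f(t,x(t),\mathbf x_t,\dot x(t))$ for all $t$. Conditions: (A0) $f$ is continuous and $f(t+2\pi,x,\mathbf y,z)=f(t,x,\mathbf y,z)$ for all arguments. (A1) There is $R>0$ such that for all $t\in\mathbb R$, $x,z\in\mathbf V$, $\mathbf y\in\mathbf V^m$: if $|x|\ge R$, $|\mathbf y|\le|x|$ and $x\bullet z=0$, then $x\bullet f(t,x,\mathbf y,z)>0$. (A2) There is a continuous $\phi:[0,\infty)\to(0,\infty)$ with $\int_0^\infty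 \frac{s\,ds}{\phi(s)}=\infty$ and $|f(t,x,\mathbf y,z)|\le\phi(|z|)$ for all $t$, all $|x|\le R$, $|\mathbf y|\le R$ and all $z$. (A3) There are constants $\alpha>0,K>0$ with $|f(t,x,\mathbf y,z)|\le\alpha\big(x\bullet f(t,x,\mathbf y,z)+|z|^2\big)+K$ for all $t$, all $|x|\le R$, $|\mathbf y|\le R$ and all $z$. *)

(* Defs.v *)
From HB Require Import structures.
From mathcomp Require Import all_boot all_order all_algebra.
From mathcomp Require Import all_classical all_reals all_analysis.
Set Implicit Arguments. Unset Strict Implicit. Unset Printing Implicit Defensive.
Import Order.TTheory GRing.Theory Num.Theory.
Import numFieldNormedType.Exports.
Local Open Scope classical_set_scope.
Local Open Scope ring_scope.

Section Defs.
Variables (R : realType) (n m : nat).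

Definition dotv (u v : 'rV[R]_n) : R := (u *m v^T) 0 0.
Definition enorm (u : 'rV[R]_n) : R := Num.sqrt (dotv u u).

(* An element y = (y^1,...,y^m) of V^m is stored as the m x n matrix whose
   j-th row is y^j; |y| := max_j |y^j|. *)
Definition mnorm (y : 'M[R]_(m, n)) : R := \big[Num.max/0]_(j < m) enorm (row j y).

Definition delays (tau : 'I_m -> R) (x : R -> 'rV[R]_n) (t : R) : 'M[R]_(m, n) :=
  \matrix_(j < m, k < n) x (t - tau j) 0 k.

Definition periodic_solution (tau : 'I_m -> R)
  (f : R -> 'rV[R]_n -> 'M[R]_(m, n) -> 'rV[R]_n -> 'rV[R]_n)
  (x : R -> 'rV[R]_n) : Prop :=
  [/\ (forall t, x (t + 2 * pi) = x t),
      (forall t, derivable x t 1),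
      (forall t, derivable (derive1 x) t 1),
      continuous (derive1 (derive1 x)) &
      (forall t, derive1 (derive1 x) t = f t (x t) (delays tau x t) (derive1 x t))].

End Defs.

(* Main.v *)
Require Import Defs.
From HB Require Import structures.
From mathcomp Require Import all_boot all_order all_algebra.
From mathcomp Require Import all_classical all_reals all_analysis.
From mathcomp Require Import lra ring.
Import Order.TTheory GRing.Theory Num.Theory.
Import numFieldNormedType.Exports.
Local Open Scope classical_set_scope.
Local Open Scope ring_scope.

Set Implicit Arguments. Unset Strict Implicit.

Section Aux.
Variable R : realType.

Lemma per_nat (T : Type) (g : R -> T) (p : R) : (forall t, g (t + p) = g t) ->
  forall (k : nat) t, g (t + k%:R * p) = g t.
Proof.
move=> hg; elim=> [|k ih] t; first by rewrite mul0r addr0.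
by rewrite -addn1 natrD mulrDl mul1r addrA hg ih.
Qed.

Lemma per_int (T : Type) (g : R -> T) (p : R) : (forall t, g (t + p) = g t) ->
  forall (k : int) t, g (t + k%:~R * p) = g t.
Proof.
move=> hg [k|k] t; first by rewrite -[(Posz k)%:~R]/(k%:R) per_nat.
rewrite NegzE mulrNz mulNr.
by rewrite -{2}(subrK ((k.+1)%:R * p) t) per_nat.
Qed.

Lemma per_reduce (T : Type) (g : R -> T) (p c : R) : 0 < p -> (forall t, g (t + p) = g t) ->
  forall t, exists t', [/\ c <= t', t' <= c + p & g t' = g t].
Proof.
move=> p0 hg t.
set k := Num.floor ((t - c) / p).
exists (t - k%:~R * p); split.
- have := floor_le ((t - c) / p); rewrite -/k ler_pdivlMr // => h; lra.
- have := floorD1_gt ((t - c) / p); rewrite -/k ltr_pdivrMr // intrD mulrDl mul1r => h; lra.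
- by rewrite -(per_int hg k) subrK.
Qed.

Lemma per_max (g : R -> R) (p : R) : 0 < p -> (forall t, g (t + p) = g t) -> continuous g ->
  exists c, forall t, g t <= g c.
Proof.
move=> p0 hg cg.
have [c _ hc] := @EVT_max R g 0 p (ltW p0) (continuous_subspaceT cg).
exists c => t; have [t' [h1 h2 <-]] := per_reduce 0 p0 hg t.
by apply: hc; rewrite in_itv /= h1; rewrite add0r in h2; rewrite h2.
Qed.

End Aux.


Section Vec.
Variables (R : realType) (n : nat).

Lemma dotvE (u v : 'rV[R]_n) : dotv u v = \sum_k u 0 k * v 0 k.
Proof. by rewrite /dotv !mxE; apply: eq_bigr => k _; rewrite mxE. Qed.

Lemma dotv_ge0 (u : 'rV[R]_n) : 0 <= dotv u u.
Proof. by rewrite dotvE sumr_ge0 // => k _; rewrite -expr2 sqr_ge0. Qed.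

Lemma enorm_ge0 (u : 'rV[R]_n) : 0 <= enorm u.
Proof. exact: sqrtr_ge0. Qed.

Lemma enorm_sqr (u : 'rV[R]_n) : enorm u ^+ 2 = dotv u u.
Proof. by rewrite /enorm sqr_sqrtr // dotv_ge0. Qed.

Lemma coord_le_enorm (u : 'rV[R]_n) k : `|u 0 k| <= enorm u.
Proof.
rewrite -sqrtr_sqr /enorm ler_wsqrtr // dotvE (bigD1 k) //= expr2 lerDl.
by rewrite sumr_ge0 // => i _; rewrite -expr2 sqr_ge0.
Qed.

Lemma enorm_le_coord (u : 'rV[R]_n) B : 0 <= B -> (forall k, `|u 0 k| <= B) ->
  enorm u <= Num.sqrt (n%:R * B ^+ 2).
Proof.
move=> B0 h; rewrite /enorm ler_wsqrtr // dotvE.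
have -> : n%:R * B ^+ 2 = \sum_(k < n) B ^+ 2 by rewrite sumr_const card_ord mulr_natl.
apply: ler_sum => k _; rewrite -expr2 -real_normK ?num_real //.
by rewrite lerXn2r ?nnegrE ?normr_ge0.
Qed.

Lemma enorm_le (u v : 'rV[R]_n) : dotv u u <= dotv v v -> enorm u <= enorm v.
Proof. by move=> h; rewrite ler_wsqrtr. Qed.

Lemma dotv_le (u v : 'rV[R]_n) : dotv u v <= enorm u * enorm v.
Proof. Abort.

End Vec.

Section Der.
Variables (R : realType) (n : nat).

Lemma is_derive_coord (x : R -> 'rV[R]_n) t k : derivable x t 1 ->
  is_derive t 1 (fun s => x s 0 k) (derive1 x t 0 k).
Proof.
move=> dx; have := dx; move/derivable_mxP => /(_ 0 k) dk.
split; first exact: dk.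
by rewrite derive1E derive_mx // mxE.
Qed.

Lemma derive1_per (V : normedModType R) (x : R -> V) (p : R) :
  (forall t, x (t + p) = x t) -> forall t, derive1 x (t + p) = derive1 x t.
Proof.
move=> hx t; rewrite !derive1E /derive.
suff -> : (fun h : R => h^-1 *: ((x \o shift (t + p)) (h *: 1) - x (t + p))) =
  (fun h => h^-1 *: ((x \o shift t) (h *: 1) - x t)) by [].
by apply: funext => h /=; rewrite addrA !hx.
Qed.

End Der.


Section Gen.
Variable R : realType.

Lemma is_derive_sumf n (h : 'I_n -> R -> R) (dh : 'I_n -> R) (t : R) :
  (forall k, is_derive t 1 (h k) (dh k)) ->
  is_derive t 1 (fun s => \sum_k h k s) (\sum_k dh k).
Proof. by move=> H; rewrite -fct_sumE; apply: is_derive_sum. Qed.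

Lemma is_derive_cont (g : R -> R) (t : R) dg : is_derive t 1 g dg -> {for t, continuous g}.
Proof. by case=> d _; apply: differentiable_continuous; apply/derivable1_diffP. Qed.

Lemma is_derive_mul (g h : R -> R) (t dg dh : R) : is_derive t 1 g dg -> is_derive t 1 h dh ->
  is_derive t 1 (fun s => g s * h s) (dg * h t + g t * dh).
Proof.
move=> Hg Hh; have := is_deriveM Hg Hh.
move=> H; rewrite (_ : (fun s => g s * h s) = g * h); last by apply: funext.
suff -> : dg * h t + g t * dh = g t *: dh + h t *: dg by [].
by rewrite addrC [dg * _]mulrC.
Qed.

Lemma cont_pos (g : R -> R) (t : R) : {for t, continuous g} -> 0 < g t ->
  exists2 e : R, 0 < e & forall s, `|t - s| < e -> 0 < g s.
Proof.
move=> cg gt.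
have : \forall s \near t, 0 < g s by apply: (cvgr_gt (g t) cg).
move=> /nbhs_ballP [e /= e0 He]; exists e => // s hs; exact: He.
Qed.

Lemma mono_der (g dg : R -> R) : (forall s : R, is_derive s 1 g (dg s)) ->
  (forall s, 0 <= dg s) -> forall a b, a <= b -> g a <= g b.
Proof.
move=> hg hdg a b ab.
apply: (@ger0_derive1_ndecr R g a b) => //.
- by move=> s _; rewrite derive1E; case: (hg s) => _ ->.
- apply: continuous_subspaceT => s; exact: is_derive_cont (hg s).
Qed.

Lemma is_derive_add (g h : R -> R) (t dg dh : R) : is_derive t 1 g dg -> is_derive t 1 h dh ->
  is_derive t 1 (fun s => g s + h s) (dg + dh).
Proof.
move=> Hg Hh; have H := is_deriveD Hg Hh.
by rewrite (_ : (fun s => g s + h s) = g + h); last by apply: funext.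
Qed.

Lemma is_derive_sub (g h : R -> R) (t dg dh : R) : is_derive t 1 g dg -> is_derive t 1 h dh ->
  is_derive t 1 (fun s => g s - h s) (dg - dh).
Proof.
move=> Hg Hh; have H := is_deriveB Hg Hh.
by rewrite (_ : (fun s => g s - h s) = g - h); last by apply: funext.
Qed.

Lemma is_derive_scal (g : R -> R) (t a dg : R) : is_derive t 1 g dg ->
  is_derive t 1 (fun s => a * g s) (a * dg).
Proof.
move=> Hg; have H := @is_deriveZ _ _ _ g a t 1 dg Hg.
by rewrite (_ : (fun s => a * g s) = a *: g); last by apply: funext.
Qed.

Lemma is_derive_idf (t : R) : is_derive t 1 (fun s : R => s) 1.
Proof. exact: is_derive_id. Qed.

End Gen.


Unset Implicit Arguments. Set Strict Implicit.


Section Sol.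
Variables (R : realType) (n m : nat) (tau : 'I_m -> R)
  (f : R -> 'rV[R]_n -> 'M[R]_(m, n) -> 'rV[R]_n -> 'rV[R]_n) (x : R -> 'rV[R]_n).
Hypothesis hsol : periodic_solution tau f x.

Local Notation d1 := (derive1 x).
Local Notation d2 := (derive1 (derive1 x)).

Lemma P0 : 0 < 2 * pi :> R.
Proof. by rewrite mulr_gt0 // pi_gt0. Qed.

Lemma xper (t : R) : x (t + 2 * pi) = x t. Proof. by case: hsol. Qed.
Lemma dx (t : R) : derivable x t 1. Proof. by case: hsol. Qed.
Lemma dd1 (t : R) : derivable d1 t 1. Proof. by case: hsol. Qed.
Lemma cd2 : continuous d2. Proof. by case: hsol. Qed.
Lemma heq (t : R) : d2 t = f t (x t) (delays tau x t) (d1 t). Proof. by case: hsol. Qed.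
Lemma d1per (t : R) : d1 (t + 2 * pi) = d1 t. Proof. exact: derive1_per xper t. Qed.

Lemma hy k (t : R) : is_derive t 1 (fun s => x s 0 k) (d1 t 0 k).
Proof. exact: is_derive_coord k (dx t). Qed.
Lemma hd k (t : R) : is_derive t 1 (fun s => d1 s 0 k) (d2 t 0 k).
Proof. exact: is_derive_coord k (dd1 t). Qed.
Lemma cy k : continuous (fun s => x s 0 k).
Proof. by move=> t; apply: is_derive_cont (hy k t). Qed.
Lemma cd1 k : continuous (fun s => d1 s 0 k).
Proof. by move=> t; apply: is_derive_cont (hd k t). Qed.
Lemma cd2k k : continuous (fun s => d2 s 0 k).
Proof.
move=> t; apply: (@continuous_comp _ _ _ d2 (fun M : 'rV[R]_n => M 0 k)).
  exact: cd2.
exact: coord_continuous.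
Qed.

Definition rr s := dotv (x s) (x s).
Definition qq s := dotv (x s) (d1 s).
Definition qd s := dotv (d1 s) (d1 s) + dotv (x s) (d2 s).

Lemma rr_der (t : R) : is_derive t 1 rr (2 * qq t).
Proof.
have -> : rr = fun s => \sum_k x s 0 k * x s 0 k by apply: funext => s; rewrite /rr dotvE.
apply: is_derive_eq; first by apply: is_derive_sumf => k; apply: is_derive_mul; apply: hy.
rewrite /qq dotvE mulr_sumr; apply: eq_bigr => k _; ring.
Qed.

Lemma qq_der (t : R) : is_derive t 1 qq (qd t).
Proof.
have -> : qq = fun s => \sum_k x s 0 k * d1 s 0 k by apply: funext => s; rewrite /qq dotvE.
apply: is_derive_eq.
  by apply: is_derive_sumf => k; apply: is_derive_mul; [apply: hy|apply: hd].
rewrite /qd !dotvE -big_split; apply: eq_bigr => k _ /=; ring.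
Qed.

Lemma qd_cont : continuous qd.
Proof.
have -> : qd = fun s => \sum_k (d1 s 0 k * d1 s 0 k + x s 0 k * d2 s 0 k).
  by apply: funext => s; rewrite /qd !dotvE -big_split.
apply: (continuous_big add_continuous) => k _ t.
apply: (@continuousD _ _ _ (fun s => d1 s 0 k * d1 s 0 k) (fun s => x s 0 k * d2 s 0 k)).
  by apply: (@continuousM _ _ (fun s => d1 s 0 k) (fun s => d1 s 0 k)); apply: cd1.
by apply: (@continuousM _ _ (fun s => x s 0 k) (fun s => d2 s 0 k)); [apply: cy|apply: cd2k].
Qed.

Lemma rr_cont : continuous rr.
Proof. by move=> t; apply: is_derive_cont (rr_der t). Qed.
Lemma qq_cont : continuous qq.
Proof. by move=> t; apply: is_derive_cont (qq_der t). Qed.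
Lemma rr_per t : rr (t + 2 * pi) = rr t.
Proof. by rewrite /rr xper. Qed.
Lemma qq_per t : qq (t + 2 * pi) = qq t.
Proof. by rewrite /qq xper d1per. Qed.

Lemma row_delays (t : R) j : row j (delays tau x t) = x (t - tau j).
Proof. by apply/rowP => k; rewrite !mxE. Qed.

Lemma x_small (Rr : R)
  (hA1 : forall t x y z, Rr <= enorm x -> mnorm y <= enorm x -> dotv x z = 0 ->
           0 < dotv x (f t x y z)) :
  forall t, enorm (x t) < Rr.
Proof.
have [t0 ht0] := per_max P0 rr_per rr_cont.
suff h : enorm (x t0) < Rr.
  by move=> t; apply: le_lt_trans h; apply: enorm_le; apply: ht0.
rewrite ltNge; apply/negP => hR.
have q0 : qq t0 = 0.
  have h : is_derive t0 1 rr 0.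
    apply: (@derive1_at_max _ rr (t0 - 1) (t0 + 1) t0).
    - lra.
    - by move=> s _; case: (rr_der s).
    - rewrite in_itv /=; apply/andP; split; lra.
    - by move=> s _; apply: ht0.
  have e1 : derive rr t0 1 = 2 * qq t0 by case: (rr_der t0).
  have e2 : derive rr t0 1 = 0 by case: h.
  rewrite e2 in e1; lra.
have hmn : mnorm (delays tau x t0) <= enorm (x t0).
  rewrite /mnorm; apply: bigmax_le; first exact: enorm_ge0.
  by move=> j _; rewrite row_delays; apply: enorm_le; apply: ht0.
have hpos := hA1 t0 (x t0) (delays tau x t0) (d1 t0) hR hmn q0.
rewrite -heq in hpos.
have qd0 : 0 < qd t0 by rewrite /qd; apply: ltr_wpDl (dotv_ge0 _) hpos.
have [e e0 He] := cont_pos (qd_cont t0) qd0.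
have hq : forall c, t0 < c -> c < t0 + e -> 0 < qq c.
  move=> c h1 h2.
  have [d hd hmvt] := @MVT R qq qd t0 c h1 (fun s _ => qq_der s)
     (continuous_subspaceT qq_cont).
  move: hd; rewrite in_itv /= => /andP [hd1 hd2].
  rewrite q0 subr0 in hmvt; rewrite hmvt; apply: mulr_gt0; last by rewrite subr_gt0.
  apply: He; rewrite ltr_norml; apply/andP; split; clear -h1 h2 hd1 hd2 e0; lra.
have [c hc hmvt] := @MVT R rr (fun s => 2 * qq s) t0 (t0 + e / 2) ltac:(lra)
     (fun s _ => rr_der s) (continuous_subspaceT rr_cont).
move: hc; rewrite in_itv /= => /andP [hc1 hc2].
have : 0 < qq c by apply: hq; lra.
have := ht0 (t0 + e / 2).
move=> h1 h2.
have h3 : 0 < 2 * qq c * (t0 + e / 2 - t0).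
  apply: mulr_gt0; [by apply: mulr_gt0 | by rewrite addrAC subrr add0r; apply: divr_gt0].
move: h1 h3; rewrite -hmvt subr_gt0 => h1 h3.
by move: h1; rewrite leNgt h3.
Qed.

Lemma d2_bound (Rr alpha K : R) (hxs : forall t, enorm (x t) < Rr)
  (hA3 : forall t x y z, enorm x <= Rr -> mnorm y <= Rr ->
           enorm (f t x y z) <= alpha * (dotv x (f t x y z) + enorm z ^+ 2) + K) :
  forall t, enorm (d2 t) <= alpha * qd t + K.
Proof.
move=> t.
have h1 : enorm (x t) <= Rr by apply: ltW.
have h2 : mnorm (delays tau x t) <= Rr.
  rewrite /mnorm; apply: bigmax_le; first exact: le_trans (enorm_ge0 _) h1.
  by move=> j _; rewrite row_delays; apply: ltW.
have := hA3 t (x t) (delays tau x t) (d1 t) h1 h2.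
by rewrite -heq enorm_sqr /qd [dotv (d1 t) _ + _]addrC.
Qed.

Lemma d1_zero k : exists c, d1 c 0 k = 0.
Proof.
have [c hc] := per_max P0 (fun t => congr1 (fun M : 'rV[R]_n => M 0 k) (xper t)) (cy k).
exists c.
have h : is_derive c 1 (fun s => x s 0 k) 0.
  apply: (@derive1_at_max _ _ (c - 1) (c + 1) c).
  - lra.
  - by move=> s _; case: (hy k s).
  - rewrite in_itv /=; apply/andP; split; lra.
  - by move=> s _; apply: hc.
have e1 : derive (fun s => x s 0 k) c 1 = d1 c 0 k by case: (hy k c).
have e2 : derive (fun s => x s 0 k) c 1 = 0 by case: h.
by rewrite -e1 e2.
Qed.

Lemma d1k_bound (alpha K : R)
  (hd2 : forall t, enorm (d2 t) <= alpha * qd t + K) :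
  forall k t, `|d1 t 0 k| <= 2 * pi * K.
Proof.
move=> k t.
pose w s := alpha * qq s + K * s.
have hw : forall s : R, is_derive s 1 w (alpha * qd s + K * 1).
  move=> s; apply: (is_derive_add (is_derive_scal alpha (qq_der s)) (is_derive_scal K (is_derive_idf s))).
have hc2 : forall s, `|d2 s 0 k| <= alpha * qd s + K * 1.
  by move=> s; rewrite mulr1; apply: le_trans (hd2 s); apply: coord_le_enorm.
have hp1 : forall s, 0 <= alpha * qd s + K * 1 + d2 s 0 k.
  move=> s; move: (hc2 s); move: (alpha * qd s + K * 1) (d2 s 0 k) => A d.
  rewrite ler_norml => /andP [u1 u2]; lra.
have hp2 : forall s, 0 <= alpha * qd s + K * 1 - d2 s 0 k.
  move=> s; move: (hc2 s); move: (alpha * qd s + K * 1) (d2 s 0 k) => A d.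
  rewrite ler_norml => /andP [u1 u2]; lra.
have hp0 : forall s, 0 <= alpha * qd s + K * 1.
  by move=> s; apply: le_trans (hc2 s).
have key : forall a b, a <= b -> `|d1 b 0 k - d1 a 0 k| <= w b - w a.
  move=> a b ab.
  have m1 := @mono_der R (fun s => w s + d1 s 0 k) (fun s => alpha * qd s + K * 1 + d2 s 0 k)
     (fun s => is_derive_add (hw s) (hd k s)) hp1 a b ab.
  have m2 := @mono_der R (fun s => w s - d1 s 0 k) (fun s => alpha * qd s + K * 1 - d2 s 0 k)
     (fun s => is_derive_sub (hw s) (hd k s)) hp2 a b ab.
  move: m1 m2 => /= m1 m2.
  move: (w a) (w b) (d1 a 0 k) (d1 b 0 k) m1 m2 => wa wb da db m1 m2.
  rewrite ler_norml; apply/andP; split; lra.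
have hwm := mono_der hw hp0.
have [c hc] := d1_zero k.
have [t' [h1 h2 h3]] := per_reduce c P0 (fun s => congr1 (fun M : 'rV[R]_n => M 0 k) (d1per s)) t.
rewrite -h3 -[d1 t' 0 k]subr0 -hc.
apply: le_trans (key c t' h1) _.
have := hwm t' (c + 2 * pi) h2.
have e : w (c + 2 * pi) = w c + 2 * pi * K by rewrite /w qq_per; ring.
rewrite e; move: (w t') (w c) => a b; lra.
Qed.

Lemma mnorm_small (Rr : R) (hxs : forall t, enorm (x t) < Rr) t :
  mnorm (delays tau x t) <= Rr.
Proof.
rewrite /mnorm; apply: bigmax_le; first exact: le_trans (enorm_ge0 _) (ltW (hxs t)).
by move=> j _; rewrite row_delays; apply: ltW.
Qed.

End Sol.



Theorem theorem3p1 (R : realType) (n m : nat) (hn : (1 <= n)%N) (hm : (1 <= m)%N)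
  (tau : 'I_m -> R)
  (f : R -> 'rV[R]_n -> 'M[R]_(m, n) -> 'rV[R]_n -> 'rV[R]_n)
  (htau0 : forall j : 'I_m, 0 < tau j)
  (htau_mono : forall i j : 'I_m, (i < j)%N -> tau i < tau j)
  (htau_lt : forall j : 'I_m, tau j < 2 * pi)
  (htau_sym : forall j : 'I_m, tau (rev_ord j) = 2 * pi - tau j)
  (hA0c : continuous (fun p : R * 'rV[R]_n * 'M[R]_(m, n) * 'rV[R]_n =>
                        f p.1.1.1 p.1.1.2 p.1.2 p.2))
  (hA0p : forall t x y z, f (t + 2 * pi) x y z = f t x y z)
  (Rr : R) (hRr : 0 < Rr)
  (hA1 : forall t x y z, Rr <= enorm x -> mnorm y <= enorm x -> dotv x z = 0 ->
           0 < dotv x (f t x y z))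
  (phi : R -> R)
  (hphic : {within [set s : R | 0 <= s], continuous phi})
  (hphip : forall s, 0 <= s -> 0 < phi s)
  (hphiint : (\int[lebesgue_measure]_(s in [set s : R | (0 <= s)%R]) (s / phi s)%:E = +oo)%E)
  (hA2 : forall t x y z, enorm x <= Rr -> mnorm y <= Rr ->
           enorm (f t x y z) <= phi (enorm z))
  (alpha K : R) (halpha : 0 < alpha) (hK : 0 < K)
  (hA3 : forall t x y z, enorm x <= Rr -> mnorm y <= Rr ->
           enorm (f t x y z) <= alpha * (dotv x (f t x y z) + enorm z ^+ 2) + K) :
  exists C : R, 0 < C /\
    forall x : R -> 'rV[R]_n, periodic_solution tau f x ->
      forall t, [/\ enorm (x t) < C, enorm (derive1 x t) < C & enorm (derive1 (derive1 x) t) < C].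
Proof.
set B1 := Num.sqrt (n%:R * (2 * pi * K) ^+ 2).
have B10 : 0 <= B1 := sqrtr_ge0 _.
have sub : `[0, B1] `<=` [set s : R | 0 <= s].
  by move=> s; rewrite /= in_itv /= => /andP [].
have [c hc hmax] := @EVT_max R phi 0 B1 B10 (continuous_subspaceW sub hphic).
have c0 : 0 <= c by move: hc; rewrite in_itv /= => /andP [].
have pc := hphip c c0.
exists (Rr + B1 + phi c + 1); split; first lra.
move=> x hsol t.
have hxs := x_small _ _ _ _ _ _ hsol _ hA1.
have hd2 := d2_bound _ _ _ _ _ _ hsol _ _ _ hxs hA3.
have hd1k := d1k_bound _ _ _ _ _ _ hsol _ _ hd2.
have K0 : 0 <= 2 * pi * K by apply: ltW; apply: mulr_gt0 => //; apply: mulr_gt0 => //; apply: pi_gt0.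
have hd1 : enorm (derive1 x t) <= B1 := enorm_le_coord K0 (fun k => hd1k k t).
have hf : enorm (derive1 (derive1 x) t) <= phi c.
  rewrite (heq _ _ _ _ _ _ hsol t); apply: le_trans (hA2 _ _ _ _ (ltW (hxs t)) (mnorm_small _ _ _ tau _ _ hxs t)) _.
  by apply: hmax; rewrite in_itv /= enorm_ge0 hd1.
have := hxs t; have := enorm_ge0 (x t).
move: (enorm (x t)) (enorm (derive1 x t)) (enorm (derive1 (derive1 x) t)) hd1 hf => a b d h1 h2 h3 h4.
split; lra.
Qed.
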